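(* Let $\delta$ be an $\mathfrak l_m$-dominant integral weight, let $k\ge k'$ be non-negative integers, and let $K\in\kappa(\delta,k)$ and $K'\in\kappa(\delta,k')$ with $K\ne K'$. Then $\chi_{\delta+\lambda_K}=\chi_{\delta+\lambda_{K'}}$ if and only if $\delta$ is resonant, $i:=i(\delta,k)$ is defined, $\tilde\delta_i<k+K_i$, and $K'=K-d\,e_i$ where $d=k+K_i-\tilde\delta_i$.
   Context: $\mathfrak a_m\cong\mathfrak{sl}_{m+1}$ is the projective subalgebra $\mathrm{Span}\{\partial_{x_i},x_j\partial_{x_i},x_j\sum_rx_r\partial_{x_r}\}$ of polynomial vector fields on $\mathbb R^m$, with Cartan subalgebra $\mathfrak h_m=\mathrm{Span}\{x_i\partial_{x_i}\}$. Weights: $\mathfrak h_m^*=\{\lambda=\sum_{i=0}^m\lambda_i\epsilon_i:\sum\lambda_i=0\}$ with $\lambda(x_j\partial_{x_j})=\lambda_j$ ($1\le j\le m$). Let $\rho=\sum_{i=0}^m(\tfrac m2-i)\epsilon_i$; $S_{m+1}$ acts on $\mathfrak h_m^*$ by permuting indices $0,\dots,m$, $w\cdot\lambda=w(\lambda+\rho)-\rho$; $\chi_\lambda$ is the infinitesimal character of $\mathfrak a_m$ associated to $\lambda$ via the Harish-Chandra isomorphism, and $\chi_\lambda=\chi_{\lambda'}$ iff $\lambda'\in S_{m+1}\cdot\lambda$. $\lambda$ is $\mathfrak l_m$-dominant integral if $\lambda_i-\lambda_{i+1}\in\mathbb N$ for $1\le i<m$. $e_i$ is the $i$-th standard basis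 vector of $\mathbb Z^m$. For $K\in\mathbb N^m$: $|K|=\sum K_i$, $\lambda_K=|K|\epsilon_0-\sum_{i=1}^mK_i\epsilon_i$, $\kappa(\delta,k)=\{K\in\mathbb N^m:|K|=k,\ K_i\le\delta_i-\delta_{i+1}\text{ for }i<m\}$. For $\delta=(\delta_0,\dots,\delta_m)$ $\mathfrak l_m$-dominant integral: $i(\delta)\in\{1,\dots,m\}$ is maximal with $\delta_1=\cdots=\delta_{i(\delta)}$; $\tilde\delta_i=\delta_i-i-\delta_0$; $\delta$ is resonant if $\tilde\delta_{i(\delta)}\in\mathbb Z^+$; for $\delta$ resonant, $k\in\mathbb Z^+$ and $\tilde\delta_{i(\delta)}\ge k$, $i(\delta,k)\in\{i(\delta),\dots,m\}$ is maximal with $\tilde\delta_{i(\delta,k)}\ge k$; otherwise $i(\delta,k)$ is undefined. *)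

(* Defs.v *)
From HB Require Import structures.
From mathcomp Require Import all_boot all_order all_algebra perm.
Set Implicit Arguments. Unset Strict Implicit. Unset Printing Implicit Defensive.
Import Order.TTheory GRing.Theory Num.Theory.
Local Open Scope ring_scope.

Section Weights.
Variables (C : numClosedFieldType) (m : nat).

(* A weight lambda = sum_{i=0}^m lambda_i eps_i is a function 'I_m.+1 -> C;
   the condition sum lambda_i = 0 is imposed separately as a hypothesis. *)
Definition wt := 'I_m.+1 -> C.

Definition wat (l : wt) (i : nat) : C := l (inord i).

Definition is_weight (l : wt) : Prop := \sum_(i < m.+1) l i = 0.

Definition rho : wt := fun i => (m%:R / 2%:R) - (nat_of_ord i)%:R.

(* chi_l = chi_l'  iff  l' \in S_{m+1} . l, i.e. l' + rho = w (l + rho)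
   for some permutation w of the indices 0..m. *)
Definition same_chi (l l' : wt) : Prop :=
  exists s : 'S_m.+1, forall i : 'I_m.+1, l' i + rho i = l (s i) + rho (s i).

Definition lm_dominant (l : wt) : Prop :=
  forall i : nat, (1 <= i)%N -> (i < m)%N -> exists n : nat, wat l i - wat l i.+1 = n%:R.

(* K \in N^m is a function 'I_m -> nat; K_i (1 <= i <= m) is K at ordinal i-1. *)
Definition Kat (K : 'I_m -> nat) (i : nat) : nat :=
  match unlift ord0 (inord i : 'I_m.+1) with Some j => K j | None => 0%N end.

Definition absK (K : 'I_m -> nat) : nat := (\sum_(j < m) K j)%N.

Definition lamK (K : 'I_m -> nat) : wt :=
  fun i => match unlift ord0 i with
           | None => (absK K)%:R
           | Some j => - (K j)%:R
           end.

Definition addw (l l' : wt) : wt := fun i => l i + l' i.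

Definition kappa (d : wt) (k : nat) (K : 'I_m -> nat) : Prop :=
  absK K = k /\
  forall i : nat, (1 <= i)%N -> (i < m)%N -> (Kat K i)%:R <= wat d i - wat d i.+1.

Definition idelta (d : wt) : nat :=
  (\max_(i < m.+1 | (0 < i)%N &&
      [forall j : 'I_m.+1, ((0 < j)%N && (j <= i)%N) ==> (d j == wat d 1)%R]) i)%N.

Definition dtilde (d : wt) (i : nat) : C := wat d i - i%:R - wat d 0.

Definition resonant (d : wt) : Prop :=
  exists n : nat, (0 < n)%N /\ dtilde d (idelta d) = n%:R.

(* idk d k i  <->  i(delta,k) is defined and equals i *)
Definition idk (d : wt) (k : nat) (i : nat) : Prop :=
  resonant d /\ (0 < k)%N /\ k%:R <= dtilde d (idelta d) /\
  i = (\max_(j < m.+1 | (idelta d <= j)%N && (k%:R <= dtilde d j)%R) j)%N.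

End Weights.

(* Main.v *)
Require Import Defs.
From HB Require Import structures.
From mathcomp Require Import all_boot all_order all_algebra perm.
From mathcomp Require Import ring zify.
Set Implicit Arguments. Unset Strict Implicit. Unset Printing Implicit Defensive.
Import Order.TTheory GRing.Theory Num.Theory.
Local Open Scope ring_scope.

Lemma Kat_lift (m : nat) (K : 'I_m -> nat) (j : 'I_m) : Kat K j.+1 = K j.
Proof.
rewrite /Kat.
have -> : (inord j.+1 : 'I_m.+1) = lift ord0 j.
  apply: val_inj => /=; rewrite inordK; [by rewrite /bump| by rewrite ltnS ltn_ord].
by rewrite liftK.
Qed.

Lemma Kat0 (m : nat) (i : nat) : Kat (fun _ : 'I_m => 0%N) i = 0%N.
Proof. by rewrite /Kat; case: unlift. Qed.

Lemma wat_val (C : numClosedFieldType) (m : nat) (d : wt C m) (t : 'I_m.+1) :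
  wat d t = d t.
Proof. by rewrite /wat inord_val. Qed.

Definition nuv (C : numClosedFieldType) (m : nat) (d : wt C m) (K : 'I_m -> nat)
  (t : 'I_m.+1) : C :=
  if t == ord0 then (absK K)%:R else dtilde d t - (Kat K t)%:R.

Lemma conv (C : numClosedFieldType) (m : nat) (d : wt C m) (K : 'I_m -> nat)
  (t : 'I_m.+1) :
  addw d (lamK C K) t + rho C t = wat d 0 + m%:R / 2%:R + nuv d K t.
Proof.
have w0 : wat d 0 = d ord0 by rewrite -(wat_val d ord0).
rewrite /addw /lamK /rho /nuv /dtilde w0.
case: (unliftP ord0 t) => [j ->|->].
  rewrite eq_sym (negbTE (neq_lift _ _)) wat_val lift0 Kat_lift.
  ring.
rewrite eqxx /= subr0; ring.
Qed.

Lemma dom_diff (C : numClosedFieldType) (m : nat) (d : wt C m) :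
  lm_dominant d -> forall a c, (1 <= a)%N -> (a + c <= m)%N ->
  exists n : nat, dtilde d a - dtilde d (a + c) = (n + c)%:R.
Proof.
move=> hd a c a1; elim: c => [|c IH] hc.
  by exists 0%N; rewrite addn0 subrr.
have [n Hn] := IH (ltac:(lia)).
have [n' Hn'] := hd (a + c)%N (leq_trans a1 (leq_addr _ _)) (ltac:(lia)).
exists (n + n')%N.
have -> : dtilde d a - dtilde d (a + c.+1) =
   (dtilde d a - dtilde d (a + c)) + (wat d (a + c) - wat d (a + c).+1) + 1.
  rewrite /dtilde addnS -addn1 natrD; ring.
rewrite Hn Hn' -natrD natr1; apply/eqP; rewrite eqr_nat; apply/eqP; lia.
Qed.

Definition kbounds (C : numClosedFieldType) (m : nat) (d : wt C m) (K : 'I_m -> nat) :=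
  forall i : nat, (1 <= i)%N -> (i < m)%N -> (Kat K i)%:R <= wat d i - wat d i.+1.

Lemma kb0 (C : numClosedFieldType) (m : nat) (d : wt C m) :
  lm_dominant d -> kbounds d (fun _ => 0%N).
Proof.
move=> hd i i1 im; rewrite Kat0; have [n ->] := hd i i1 im; by rewrite ler_nat.
Qed.

Lemma interv_lem (C : numClosedFieldType) (m : nat) (d : wt C m) (K : 'I_m -> nat) :
  lm_dominant d -> kbounds d K -> forall t u, (1 <= t)%N -> (t < u)%N -> (u <= m)%N ->
  exists p : nat, dtilde d t - (Kat K t)%:R - dtilde d u = p.+1%:R.
Proof.
move=> hd hb t u t1 tu um.
have tm : (t < m)%N by lia.
have [n Hn] := hd t t1 tm.
have Hb := hb t t1 tm; rewrite Hn ler_nat in Hb.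
have [q Hq] := dom_diff (a := t.+1) (c := u - t.+1) hd (ltn0Sn _) (ltac:(lia)).
have E : (t.+1 + (u - t.+1))%N = u by lia.
rewrite E in Hq.
exists (n - Kat K t + q + (u - t.+1))%N.
have -> : dtilde d t - (Kat K t)%:R - dtilde d u =
  (wat d t - wat d t.+1) + 1 + (dtilde d t.+1 - dtilde d u) - (Kat K t)%:R.
  rewrite /dtilde -addn1 natrD; ring.
rewrite Hn Hq.
apply/eqP; rewrite subr_eq natr1 -!natrD eqr_nat; apply/eqP; lia.
Qed.
Lemma idelta_prop (C : numClosedFieldType) (m : nat) (d : wt C m) : (0 < m)%N ->
  [/\ (1 <= idelta d)%N, (idelta d <= m)%N &
  forall j, (0 < j)%N -> (j <= idelta d)%N -> wat d j = wat d 1].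
Proof.
move=> hm.
set P := fun i : 'I_m.+1 => (0 < i)%N &&
      [forall j : 'I_m.+1, ((0 < j)%N && (j <= i)%N) ==> (d j == wat d 1)%R].
have i1 : ((inord 1 : 'I_m.+1) = 1 :> nat) by rewrite inordK // ltnS.
have P1 : P (inord 1).
  rewrite /P i1 /=; apply/forallP => j; apply/implyP => /andP[j0 j1].
  have -> : j = inord 1 by apply: val_inj; rewrite /= i1; lia.
  by rewrite /wat.
have cA : (0 < #|[pred i | P i]|)%N by apply/card_gt0P; exists (inord 1).
have [i0 Pi0 E] := eq_bigmax_cond (fun i : 'I_m.+1 => nat_of_ord i) cA.
have -> : idelta d = i0 by rewrite /idelta -E.
move: Pi0; rewrite inE /P => /andP[pos /forallP all].
split => //; first by rewrite -ltnS ltn_ord.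
move=> j j0 ji.
have jm : (j < m.+1)%N by apply: (leq_ltn_trans ji).
have := all (inord j); rewrite inordK // j0 ji /= => /eqP.
by rewrite /wat => ->.
Qed.

Unset Implicit Arguments.
Theorem mainTheorem11 (C : numClosedFieldType) (m : nat) (hm : (0 < m)%N)
  (d : wt C m) (hw : is_weight d) (hd : lm_dominant d)
  (k k' : nat) (hkk : (k' <= k)%N) (K K' : 'I_m -> nat)
  (hK : kappa d k K) (hK' : kappa d k' K') (hne : exists j, K j <> K' j) :
  same_chi (addw d (@lamK C m K)) (addw d (@lamK C m K')) <->
  (resonant d /\
   exists i : nat, idk d k i /\
     dtilde d i < k%:R + (Kat K i)%:R /\
     forall j : 'I_m,
       (K' j)%:R = (K j)%:R
                   - (if j.+1 == i then k%:R + (Kat K i)%:R - dtilde d i else 0)).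
Proof.
have [absk hb] := hK; have [absk' hb'] := hK'.
have ne0 : forall t : 'I_m.+1, (t != ord0) = (0 < t)%N.
  by move=> t; rewrite lt0n.
split.
- case=> s Hs.
  have Hn : forall t, nuv d K' t = nuv d K (s t).
    by move=> t; have := Hs t; rewrite !conv => /addrI.
  have SA : forall t : 'I_m.+1, t != ord0 -> s t != ord0 -> s t = t.
    move=> t t0 st0; have := Hn t; rewrite /nuv (negbTE t0) (negbTE st0) => H.
    move: t0 st0; rewrite !ne0 => t0 st0.
    case: (ltngtP t (s t)) => [lt|gt|eq]; last by apply: val_inj.
    + have [p Hp] := interv_lem hd hb' t0 lt (ltn_ord (s t) : (s t <= m)%N).
      exfalso; move: Hp; rewrite H.
      have -> : dtilde d (s t) - (Kat K (s t))%:R - dtilde d (s t) = - (Kat K (s t))%:R by ring.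
      move/eqP; rewrite eq_sym -subr_eq0 opprK -natrD pnatr_eq0; lia.
    + have [p Hp] := interv_lem hd hb st0 gt (ltn_ord t : (t <= m)%N).
      exfalso; move: Hp; rewrite -H.
      have -> : dtilde d t - (Kat K' t)%:R - dtilde d t = - (Kat K' t)%:R by ring.
      move/eqP; rewrite eq_sym -subr_eq0 opprK -natrD pnatr_eq0; lia.
  set i := (s^-1)%g ord0.
  have si0 : s i = ord0 by rewrite /i permKV.
  have SO : forall t, t != i -> t != ord0 -> s t = t.
    move=> t ti t0; apply: SA => //; apply/eqP => st0.
    have : s t = s i by rewrite st0 si0.
    by move/perm_inj => tie; rewrite tie eqxx in ti.
  have KeqO : forall j : 'I_m, lift ord0 j != i -> K' j = K j.
    move=> j ji; have := Hn (lift ord0 j).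
    rewrite SO // ?(eq_sym _ ord0) ?neq_lift // /nuv.
    rewrite eq_sym (negbTE (neq_lift _ _)) lift0 Kat_lift Kat_lift.
    by move/addrI/oppr_inj/eqP; rewrite eqr_nat => /eqP.
  have i0 : i != ord0.
    apply/eqP => ieq; case: hne => j; rewrite KeqO //.
    by rewrite ieq eq_sym neq_lift.
  have s0i : s ord0 = i.
    case: (eqVneq (s ord0) i) => // ne; exfalso.
    case: (eqVneq (s ord0) ord0) => [e0|n0].
      have : s ord0 = s i by rewrite e0 si0.
      by move/perm_inj => e; rewrite -e eqxx in i0.
    have := SO _ ne n0; move/perm_inj => e; by rewrite e eqxx in n0.
  have i0' : ord0 != i by rewrite eq_sym.
  have [j0 ij0 _] := unlift_some (i0' : ord0 != i).
  have E0 := Hn ord0.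
  rewrite s0i /nuv eqxx (negbTE i0) ij0 lift0 Kat_lift absk' in E0.
  have Ei := Hn i.
  rewrite si0 /nuv eqxx (negbTE i0) absk ij0 lift0 Kat_lift in Ei.
  have DT : dtilde d j0.+1 = k%:R + (K' j0)%:R by rewrite -Ei subrK.
  have DT' : dtilde d j0.+1 = k'%:R + (K j0)%:R by rewrite E0 subrK.
  have natE : (k + K' j0 = k' + K j0)%N.
    by apply/eqP; rewrite -(eqr_nat C) !natrD -DT -DT'.
  have Kne : K j0 <> K' j0.
    case: hne => j; case: (eqVneq j j0) => [-> //|nj].
    by rewrite KeqO // ij0 (inj_eq (@lift_inj _ ord0)).
  have kk : (k' < k)%N by lia.
  have j0lt := ltn_ord j0.
  have [ID1 IDm IDp] := idelta_prop d hm.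
  have IDi : (idelta d <= j0.+1)%N.
    rewrite leqNgt; apply/negP => lt.
    have j0m : (j0.+1 < m)%N by lia.
    have w1 : wat d j0.+1 = wat d 1 by apply: IDp => //; lia.
    have w2 : wat d j0.+2 = wat d 1 by apply: IDp => //; lia.
    have e : wat d j0.+1 - wat d j0.+2 = 0 by rewrite w1 w2 subrr.
    have := hb j0.+1 isT j0m; have := hb' j0.+1 isT j0m.
    rewrite e !Kat_lift !lern0 => /eqP a /eqP b; lia.
  have [q Hq] := dom_diff (a := idelta d) (c := j0.+1 - idelta d) hd ID1 (ltac:(lia)).
  have E2 : (idelta d + (j0.+1 - idelta d))%N = j0.+1 by lia.
  rewrite E2 DT in Hq.
  have DID : dtilde d (idelta d) = (k + K' j0 + (q + (j0.+1 - idelta d)))%:R.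
    by rewrite natrD -Hq natrD; ring.
  have res : resonant d.
    exists (k + K' j0 + (q + (j0.+1 - idelta d)))%N; split => //; lia.
  split => //; exists j0.+1; split; last split.
  + split => //; split; first lia. split; first by rewrite DID ler_nat; lia.
    apply/eqP; rewrite eqn_leq; apply/andP; split.
    * have := @leq_bigmax_cond _ (fun j : 'I_m.+1 => (idelta d <= j)%N && (k%:R <= dtilde d j)) (fun j => nat_of_ord j) (lift ord0 j0).
      rewrite lift0 IDi DT -natrD ler_nat leq_addr; apply => //.
    * apply/bigmax_leqP => j /andP[IDj kj].
      rewrite leqNgt; apply/negP => ij.
      have [p Hp] := interv_lem hd hb' (t := j0.+1) (u := j) isT ij (ltn_ord j : (j <= m)%N).
      rewrite Kat_lift Ei in Hp.
      have : dtilde d j - k%:R = - (p.+1)%:R by rewrite -Hp opprB.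
      move: kj; rewrite -subr_ge0 => kj e; move: kj; rewrite e oppr_ge0 lern0 //.
  + by rewrite Kat_lift DT' -!natrD ltr_nat; lia.
  + move=> j; case: (eqVneq j j0) => [->|nj].
      rewrite eqxx Kat_lift DT; ring.
    have -> : (j.+1 == j0.+1) = false by rewrite eqSS; exact: negbTE nj.
    rewrite subr0 KeqO // ij0 (inj_eq (@lift_inj _ ord0)) //.
- case=> _ [i [_ [_ HK']]].
  case: hne => j0 nej0.
  have ij : j0.+1 = i.
    apply/eqP/negPn/negP => nij; apply: nej0.
    by have := HK' j0; rewrite (negbTE nij) subr0 => /eqP; rewrite eqr_nat => /eqP ->.
  subst i.
  have HKo : forall j : 'I_m, j != j0 -> K' j = K j.
    move=> j nj; have := HK' j.
    have -> : (j.+1 == j0.+1) = false by rewrite eqSS; exact: negbTE nj.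
    by rewrite subr0 => /eqP; rewrite eqr_nat => /eqP.
  have HK0 := HK' j0; rewrite eqxx Kat_lift in HK0.
  exists (tperm ord0 (lift ord0 j0)) => t; rewrite !conv; congr (_ + _).
  case: tpermP => [->|->|t1 t2].
  + rewrite /nuv eqxx eq_sym (negbTE (neq_lift _ _)) lift0 Kat_lift.
    rewrite /absK natr_sum (eq_bigr _ (fun j _ => HK' j)) sumrB -natr_sum.
    change (\sum_(j < m) K j)%N with (absK K); rewrite absk.
    rewrite (bigD1 j0) //= eqxx big1 ?addr0; last first.
      move=> j nj; have -> : (j.+1 == j0.+1) = false by rewrite eqSS; exact: negbTE nj.
      by [].
    rewrite Kat_lift; ring.
  + rewrite /nuv eqxx eq_sym (negbTE (neq_lift _ _)) lift0 Kat_lift absk HK0; ring.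
  + case: (unliftP ord0 t) t1 t2 => [j ->|->]; last by [].
    move=> _ t2; rewrite /nuv eq_sym (negbTE (neq_lift _ _)) lift0 !Kat_lift HKo //.
    by apply/eqP => e; apply: t2; rewrite e.
Qed.
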